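(* Let $\alpha\in\ell^2$. The following are equivalent: (i) $R_\alpha$ is bounded on $\ell^2$; (ii) $L([0,\infty))<\infty$; (iii) there exists $\epsilon>0$ such that the associated $(\epsilon,L)$-sequence has length $0$.
   Context: $\mathbb{N}=\{0,1,2,\dots\}$; $(R_\alpha f)(k)=\alpha_k\sum_{j=0}^kf(j)$. For a finite natural interval $I$: $\mu(I)=\sum_{k\in I}|\alpha_k|^2$, $\|f\|_{2,I}=(\sum_{k\in I}|f(k)|^2)^{1/2}$, $l(I,f)=\sum_{k\in I}\sum_{n\in I\setminus\{k\}}|\alpha_k\alpha_n\sum_{j=\min(k,n)+1}^{\max(k,n)}f(j)|^2$, $L(I)=(\sup_{\|f\|_{2,I}\le1}l(I,f)/\mu(I))^{1/2}$ (sup over $f$ supported in $I$; $L(I)=0$ if $\alpha$ vanishes on $I$). For infinite intervals, $L([a,\infty))=\lim_{b\to\infty}L([a,b])=\sup_{b\ge a}L([a,b])$. $(\epsilon,L)$-sequence: $c_0=0$, $c_{k+1}=\inf\{t\in\mathbb{N}:t>c_k,\ L([c_k,t-1])>\epsilon\}$ ($\inf\emptyset=+\infty$); it has length $N$ if $c_N<\infty$ and $c_{N+1}=+\infty$. *)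

(* Defs.v *)
From Stdlib Require Import Reals Lra Lia.
From Coquelicot Require Export Coquelicot.
Open Scope R_scope.

Definition Ralpha (alpha f : nat -> C) (k : nat) : C :=
  Cmult (alpha k) (sum_n_m f 0 k).

Definition in_l2 (f : nat -> C) : Prop :=
  ex_series (fun k => (Cmod (f k)) ^ 2).
Definition l2norm2 (f : nat -> C) : R :=
  Series (fun k => (Cmod (f k)) ^ 2).

Definition Ralpha_bounded (alpha : nat -> C) : Prop :=
  exists M : R, forall f : nat -> C, in_l2 f ->
    in_l2 (Ralpha alpha f) /\ l2norm2 (Ralpha alpha f) <= M * l2norm2 f.

Definition mu (alpha : nat -> C) (a b : nat) : R :=
  sum_n_m (fun k => (Cmod (alpha k)) ^ 2) a b.

Definition norm2_on (f : nat -> C) (a b : nat) : R :=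
  sum_n_m (fun k => (Cmod (f k)) ^ 2) a b.

Definition supported_in (f : nat -> C) (a b : nat) : Prop :=
  forall j, (j < a \/ b < j)%nat -> f j = 0%C.

Definition lfun (alpha : nat -> C) (a b : nat) (f : nat -> C) : R :=
  sum_n_m (fun k =>
    sum_n_m (fun n =>
      if Nat.eqb n k then 0
      else (Cmod (Cmult (Cmult (alpha k) (alpha n))
                        (sum_n_m f (S (Nat.min k n)) (Nat.max k n)))) ^ 2) a b) a b.

Definition lsup (alpha : nat -> C) (a b : nat) : Rbar :=
  Lub_Rbar (fun x => exists f : nat -> C,
    supported_in f a b /\ norm2_on f a b <= 1 /\ x = lfun alpha a b f).

(* L([a,b]); L = 0 when alpha vanishes on I (i.e. mu(I) = 0).
   For finite I the supremum is finite, so [real] loses nothing. *)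
Definition Lfin (alpha : nat -> C) (a b : nat) : R :=
  if Rle_dec (mu alpha a b) 0 then 0
  else sqrt (real (lsup alpha a b) / mu alpha a b).

Definition Linf (alpha : nat -> C) (a : nat) : Rbar :=
  Lub_Rbar (fun x => exists b : nat, (a <= b)%nat /\ x = Lfin alpha a b).

(* (eps,L)-sequence, with None standing for +oo:
   c_0 = 0, c_{k+1} = inf { t > c_k : L([c_k, t-1]) > eps } (inf of empty = +oo),
   and c_{k+1} = +oo once c_k = +oo. *)
Definition is_epsL_seq (alpha : nat -> C) (eps : R) (c : nat -> option nat) : Prop :=
  c 0%nat = Some 0%nat /\
  forall k : nat,
    match c k with
    | None => c (S k) = None
    | Some ck =>
        match c (S k) with
        | Some t => (ck < t)%nat /\ Lfin alpha ck (t - 1) > eps /\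
                    (forall t', (ck < t')%nat -> Lfin alpha ck (t' - 1) > eps -> (t <= t')%nat)
        | None => forall t, (ck < t)%nat -> Lfin alpha ck (t - 1) <= eps
        end
    end.

Definition seq_length (c : nat -> option nat) (N : nat) : Prop :=
  c N <> None /\ c (S N) = None.

(* Main.v *)
Require Import Defs.
From Stdlib Require Import Reals.
From Coquelicot Require Import Coquelicot.
From Stdlib Require Import Lra Lia Arith Classical.
Open Scope R_scope.

Definition sR (a : nat -> R) (n m : nat) : R := sum_n_m a n m.
Ltac fixR := repeat match goal with |- context [@sum_n_m R_AbelianMonoid ?a ?n ?m] =>
   change (@sum_n_m R_AbelianMonoid a n m) with (sR a n m) end;
   match goal with |- @eq _ ?x ?y => change (@eq R x y) end.

Lemma sR_Sm (a : nat -> R) n m : (n <= S m)%nat ->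
  @eq R (sum_n_m a n (S m)) (sum_n_m a n m + a (S m)).
Proof. intros H. rewrite sum_n_Sm; auto. Qed.

Lemma sR_Sn (a : nat -> R) n m : (n <= m)%nat ->
  @eq R (sum_n_m a n m) (a n + sum_n_m a (S n) m).
Proof. intros H. rewrite sum_Sn_m; auto. Qed.

Lemma sR_chasles (a : nat -> R) n m k : (n <= S m)%nat -> (m <= k)%nat ->
  @eq R (sum_n_m a n k) (sum_n_m a n m + sum_n_m a (S m) k).
Proof. intros. rewrite (sum_n_m_Chasles a n m k); auto. Qed.

Lemma sR_zero (a : nat -> R) n m : (m < n)%nat -> @eq R (sum_n_m a n m) 0.
Proof. intros. rewrite sum_n_m_zero; auto. Qed.

Lemma sR_le_loc (a b : nat -> R) n m :
  (forall k, (n <= k <= m)%nat -> a k <= b k) -> sum_n_m a n m <= sum_n_m b n m.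
Proof.
  intros H. destruct (le_lt_dec n m) as [Hnm|Hnm].
  - induction m as [|m IH].
    + assert (n = 0%nat) by lia. subst. rewrite !sum_n_n. apply H; lia.
    + destruct (Nat.eq_dec n (S m)) as [->|Hne].
      * rewrite !sum_n_n. apply H; lia.
      * rewrite !sR_Sm by lia. apply Rplus_le_compat. apply IH; intros; try apply H; lia. apply H; lia.
  - rewrite !sR_zero by lia. lra.
Qed.

Lemma sR_nonneg (a : nat -> R) n m :
  (forall k, (n <= k <= m)%nat -> 0 <= a k) -> 0 <= sum_n_m a n m.
Proof.
  intros H. replace 0 with (sum_n_m (fun _ => 0) n m).
  apply sR_le_loc; auto. apply (sum_n_m_const_zero (G:=R_AbelianMonoid)).
Qed.

Lemma sR_ext (a b : nat -> R) n m :
  (forall k, (n <= k <= m)%nat -> a k = b k) -> @eq R (sum_n_m a n m) (sum_n_m b n m).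
Proof. apply sum_n_m_ext_loc. Qed.

Lemma sR_plus (a b : nat -> R) n m :
  @eq R (sum_n_m (fun k => a k + b k) n m) (sum_n_m a n m + sum_n_m b n m).
Proof. apply (sum_n_m_plus (G:=R_AbelianMonoid)). Qed.

Lemma sR_mult_l (c : R) (a : nat -> R) n m :
  @eq R (sum_n_m (fun k => c * a k) n m) (c * sum_n_m a n m).
Proof. apply (sum_n_m_mult_l (K:=R_Ring)). Qed.

Lemma sR_mult_r (c : R) (a : nat -> R) n m :
  @eq R (sum_n_m (fun k => a k * c) n m) (sum_n_m a n m * c).
Proof. apply (sum_n_m_mult_r (K:=R_Ring)). Qed.

Lemma sR_opp (a : nat -> R) n m :
  @eq R (sum_n_m (fun k => - a k) n m) (- sum_n_m a n m).
Proof.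
  rewrite (sR_ext _ (fun k => (-1) * a k)) by (intros; ring).
  rewrite sR_mult_l. lra.
Qed.

Lemma sR_minus (a b : nat -> R) n m :
  @eq R (sum_n_m (fun k => a k - b k) n m) (sum_n_m a n m - sum_n_m b n m).
Proof. unfold Rminus. rewrite sR_plus, sR_opp. lra. Qed.

Lemma sR_sub (a : nat -> R) n m p q :
  (forall k, (n <= k <= m)%nat -> 0 <= a k) -> (n <= p)%nat -> (q <= m)%nat ->
  sum_n_m a p q <= sum_n_m a n m.
Proof.
  intros H Hp Hq. destruct (le_lt_dec p q) as [Hpq|Hpq].
  - rewrite (sR_chasles a n q m) by lia.
    destruct (Nat.eq_dec n p) as [->|Hne].
    + assert (0 <= sum_n_m a (S q) m) by (apply sR_nonneg; intros; apply H; lia). lra.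
    + rewrite (sR_chasles a n (pred p) q) by lia.
      replace (S (pred p)) with p by lia.
      assert (0 <= sum_n_m a (S q) m) by (apply sR_nonneg; intros; apply H; lia).
      assert (0 <= sum_n_m a n (pred p)) by (apply sR_nonneg; intros; apply H; lia). lra.
  - rewrite sR_zero by lia. apply sR_nonneg; auto.
Qed.

Lemma sR_single (a : nat -> R) n m k :
  (forall k, (n <= k <= m)%nat -> 0 <= a k) -> (n <= k <= m)%nat ->
  a k <= sum_n_m a n m.
Proof. intros H Hk. rewrite <- (sum_n_n a k). apply sR_sub; auto; lia. Qed.

Lemma sR_const_le (a : nat -> R) n m c :
  (forall k, (n <= k <= m)%nat -> a k <= c) -> sum_n_m a n m <= INR (S m - n) * c.
Proof. intros H. rewrite <- sum_n_m_const. apply sR_le_loc; auto. Qed.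

Lemma sR_CS (u v : nat -> R) n m :
  (sum_n_m (fun k => u k * v k) n m)^2 <=
  sum_n_m (fun k => u k ^ 2) n m * sum_n_m (fun k => v k ^ 2) n m.
Proof.
  set (U := sum_n_m (fun k => u k ^ 2) n m).
  set (V := sum_n_m (fun k => v k ^ 2) n m).
  set (W := sum_n_m (fun k => u k * v k) n m).
  assert (HU : 0 <= U) by (apply sR_nonneg; intros; nra).
  assert (HV : 0 <= V) by (apply sR_nonneg; intros; nra).
  assert (Hq : forall t, 0 <= t^2 * U - 2 * t * W + V).
  { intros t.
    replace (t^2 * U - 2 * t * W + V) with (sum_n_m (fun k => (t * u k - v k)^2) n m).
    apply sR_nonneg; intros; apply pow2_ge_0.
    unfold U, V, W.
    rewrite (sR_ext _ (fun k => (t^2 * u k^2 - (2*t)*(u k * v k)) + v k ^2)) by (intros; ring).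
    rewrite sR_plus, sR_minus, !sR_mult_l. fixR. ring. }
  destruct (Req_dec U 0) as [H0|H0].
  - assert (W = 0).
    { destruct (Req_dec W 0) as [|HW]; auto.
      specialize (Hq ((V + 1) / (2 * W))). rewrite H0 in Hq.
      replace (((V + 1) / (2 * W)) ^ 2 * 0 - 2 * ((V + 1) / (2 * W)) * W + V) with (-1) in Hq by (field; auto). lra. }
    rewrite H, H0. lra.
  - specialize (Hq (W / U)).
    replace ((W / U) ^ 2 * U - 2 * (W / U) * W + V) with (V - W^2 / U) in Hq by (field; auto).
    assert (W^2/U <= V) by lra.
    apply Rmult_le_compat_r with (r:=U) in H; [|lra].
    replace (W^2/U*U) with (W^2) in H by (field; auto). lra.
Qed.

Lemma var_id (a x : nat -> R) n m :
  @eq R (sum_n_m (fun k => sum_n_m (fun l => a k * a l * ((x k - x l)^2)) n m) n m)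
   (2 * sum_n_m a n m * sum_n_m (fun k => a k * x k ^2) n m
    - 2 * (sum_n_m (fun k => a k * x k) n m)^2).
Proof.
  set (M := sum_n_m a n m).
  set (Q := sum_n_m (fun k => a k * x k ^2) n m).
  set (X := sum_n_m (fun k => a k * x k) n m).
  rewrite (sR_ext _ (fun k => M * (a k * x k ^2) + ((-2 * X) * (a k * x k) + Q * a k))).
  - rewrite !sR_plus, !sR_mult_l. fold M Q X. fixR. ring.
  - intros k _.
    rewrite (sR_ext _ (fun l => (a k * x k^2) * a l + ((-2 * (a k * x k)) * (a l * x l) + a k * (a l * x l^2)))) by (intros; ring).
    rewrite !sR_plus, !sR_mult_l. fold M Q X. fixR. ring.
Qed.

Lemma interchange (a u : nat -> R) b :
  @eq R (sum_n_m (fun k => a k * sum_n_m u 0 k) 0 b)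
        (sum_n_m (fun j => u j * sum_n_m a j b) 0 b).
Proof.
  induction b as [|b IH].
  - rewrite !sum_n_n. fixR. ring.
  - rewrite sR_Sm by lia. rewrite IH.
    rewrite (sR_Sm (fun j => u j * sum_n_m a j (S b))) by lia.
    rewrite (sR_ext (fun j => u j * sum_n_m a j (S b)) (fun j => u j * sum_n_m a j b + a (S b) * u j)).
    2:{ intros j Hj. rewrite sR_Sm by lia. fixR. ring. }
    rewrite sR_plus, sR_mult_l. rewrite sum_n_n.
    rewrite (sR_Sm u) by lia. fixR. ring.
Qed.

Lemma inv_sq_sum n :
  sum_n_m (fun j => / (INR j + 1)^2) 0 n <= 2 - / (INR n + 1).
Proof.
  induction n as [|n IH].
  - rewrite sum_n_n. simpl. lra.
  - rewrite sR_Sm by lia. rewrite S_INR.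
    assert (Hp : 0 <= INR n) by apply pos_INR.
    set (q := INR n + 1 + 1).
    assert (Hq : 2 <= q) by (unfold q; lra).
    replace (INR n + 1) with (q - 1) in IH by (unfold q; ring).
    assert (/ q ^ 2 <= / (q - 1) - / q).
    { replace (/ (q - 1) - / q) with (/ (q * (q - 1))) by (field; lra).
      apply Rinv_le_contravar. nra. nra. }
    lra.
Qed.

Lemma series_bounded (a : nat -> R) B :
  (forall n, 0 <= a n) -> (forall n, sum_n a n <= B) -> ex_series a /\ Series a <= B.
Proof.
  intros Hpos HB.
  assert (Hinc : forall n, sum_n a n <= sum_n a (S n)).
  { intros n. unfold sum_n. rewrite sR_Sm by lia. specialize (Hpos (S n)). lra. }
  pose proof (Lim_seq_correct _ (ex_lim_seq_incr _ Hinc)) as Hl.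
  assert (H1 : Rbar_le (Lim_seq (sum_n a)) B).
  { apply (is_lim_seq_le (sum_n a) (fun _ => B) _ B); auto. apply is_lim_seq_const. }
  assert (H2 : Rbar_le (sum_n a 0) (Lim_seq (sum_n a))).
  { apply (is_lim_seq_le_loc (fun _ => sum_n a 0) (sum_n a)); auto.
    - exists 0%nat. intros k _. unfold sum_n. apply sR_sub; auto; lia.
    - apply is_lim_seq_const. }
  unfold Series. destruct (Lim_seq (sum_n a)) as [r| |] eqn:E; simpl in H1, H2; try contradiction.
  split; auto. exists r. exact Hl.
Qed.

Lemma partial_le_series (a : nat -> R) :
  (forall n, 0 <= a n) -> ex_series a -> forall n, sum_n a n <= Series a.
Proof.
  intros Hpos Hex n.
  pose proof (Series_correct _ Hex) as Hs.
  assert (Hl : is_lim_seq (sum_n a) (Series a)) by exact Hs.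
  assert (H : Rbar_le (sum_n a n) (Series a)).
  { apply (is_lim_seq_le_loc (fun _ => sum_n a n) (sum_n a)); auto.
    - exists n. intros k Hk. unfold sum_n. apply sR_sub; auto; lia.
    - apply is_lim_seq_const. }
  exact H.
Qed.

Lemma Re_sum (f : nat -> C) n m : Re (sum_n_m f n m) = sum_n_m (fun j => Re (f j)) n m.
Proof.
  revert n. induction m as [|m IH]; intros n.
  - destruct n. rewrite !sum_n_n. reflexivity.
    rewrite !sum_n_m_zero by lia. reflexivity.
  - destruct (le_lt_dec n (S m)).
    + rewrite !sum_n_Sm by lia. simpl. rewrite <- IH. reflexivity.
    + rewrite !sum_n_m_zero by lia. reflexivity.
Qed.

Lemma Im_sum (f : nat -> C) n m : Im (sum_n_m f n m) = sum_n_m (fun j => Im (f j)) n m.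
Proof.
  revert n. induction m as [|m IH]; intros n.
  - destruct n. rewrite !sum_n_n. reflexivity.
    rewrite !sum_n_m_zero by lia. reflexivity.
  - destruct (le_lt_dec n (S m)).
    + rewrite !sum_n_Sm by lia. simpl. rewrite <- IH. reflexivity.
    + rewrite !sum_n_m_zero by lia. reflexivity.
Qed.

Lemma Cmod2 (z : C) : Cmod z ^ 2 = Re z ^ 2 + Im z ^ 2.
Proof.
  unfold Cmod, Re, Im. rewrite pow2_sqrt. reflexivity.
  destruct z; simpl. nra.
Qed.

Definition asq (alpha : nat -> C) k := Cmod (alpha k) ^ 2.
Definition xs (f : nat -> C) k := sum_n_m (fun j => Re (f j)) 0 k.
Definition ys (f : nat -> C) k := sum_n_m (fun j => Im (f j)) 0 k.

Lemma diff_sum (u : nat -> R) p q : (p <= q)%nat ->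
  @eq R (sum_n_m u (S p) q) (sum_n_m u 0 q - sum_n_m u 0 p).
Proof. intros H. rewrite (sR_chasles u 0 p q) by lia. fixR. ring. Qed.

Lemma lfun_dbl alpha b f :
  lfun alpha 0 b f = sum_n_m (fun k => sum_n_m (fun n =>
     asq alpha k * asq alpha n * ((xs f k - xs f n)^2 + (ys f k - ys f n)^2)) 0 b) 0 b.
Proof.
  unfold lfun. apply sR_ext; intros k Hk. apply sR_ext; intros n Hn.
  destruct (Nat.eqb n k) eqn:E.
  - apply Nat.eqb_eq in E. subst. fixR. ring.
  - rewrite Cmod_mult, Cmod_mult.
    rewrite Rpow_mult_distr, Rpow_mult_distr, (Cmod2 (sum_n_m f _ _)), Re_sum, Im_sum.
    unfold asq, xs, ys.
    destruct (le_lt_dec k n).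
    + rewrite Nat.min_l, Nat.max_r by lia.
      rewrite !diff_sum by lia. ring.
    + rewrite Nat.min_r, Nat.max_l by lia.
      rewrite !diff_sum by lia. ring.
Qed.

Definition Qf alpha f b := sum_n_m (fun k => asq alpha k * (xs f k ^ 2 + ys f k ^ 2)) 0 b.
Definition Xf alpha f b := sum_n_m (fun k => asq alpha k * xs f k) 0 b.
Definition Yf alpha f b := sum_n_m (fun k => asq alpha k * ys f k) 0 b.

Lemma lfun_var alpha b f :
  lfun alpha 0 b f = 2 * mu alpha 0 b * Qf alpha f b - 2 * (Xf alpha f b ^ 2 + Yf alpha f b ^ 2).
Proof.
  rewrite lfun_dbl.
  rewrite (sR_ext _ (fun k =>
     sum_n_m (fun n => asq alpha k * asq alpha n * (xs f k - xs f n)^2) 0 b +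
     sum_n_m (fun n => asq alpha k * asq alpha n * (ys f k - ys f n)^2) 0 b)).
  2:{ intros k _. rewrite <- sR_plus. apply sR_ext; intros; ring. }
  rewrite sR_plus, !var_id.
  unfold Qf, Xf, Yf, mu.
  rewrite (sR_ext (fun k => asq alpha k * (xs f k ^ 2 + ys f k ^ 2))
     (fun k => asq alpha k * xs f k ^ 2 + asq alpha k * ys f k ^ 2)) by (intros; ring).
  rewrite sR_plus. fold (asq alpha). unfold asq. fixR. ring.
Qed.

Lemma Ralpha_sq alpha f k : Cmod (Ralpha alpha f k) ^ 2 = asq alpha k * (xs f k ^ 2 + ys f k ^ 2).
Proof.
  unfold Ralpha. rewrite Cmod_mult, Rpow_mult_distr, (Cmod2 (sum_n_m f _ _)), Re_sum, Im_sum. reflexivity.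
Qed.

Lemma Qf_partial alpha f b : Qf alpha f b = sum_n (fun k => Cmod (Ralpha alpha f k) ^ 2) b.
Proof. unfold Qf, sum_n. apply sR_ext; intros. rewrite Ralpha_sq. reflexivity. Qed.

Lemma Xf_inter alpha f b :
  Xf alpha f b = sum_n_m (fun j => Re (f j) * sum_n_m (asq alpha) j b) 0 b.
Proof. unfold Xf, xs. apply interchange. Qed.
Lemma Yf_inter alpha f b :
  Yf alpha f b = sum_n_m (fun j => Im (f j) * sum_n_m (asq alpha) j b) 0 b.
Proof. unfold Yf, ys. apply interchange. Qed.

Lemma Qf_nonneg alpha f b : 0 <= Qf alpha f b.
Proof. unfold Qf, asq. apply sR_nonneg; intros. apply Rmult_le_pos. apply pow2_ge_0. nra. Qed.

Lemma mu_nonneg alpha a b : 0 <= mu alpha a b.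
Proof. unfold mu. apply sR_nonneg; intros. apply pow2_ge_0. Qed.

Lemma supp_series f b : supported_in f 0 b -> in_l2 f /\ l2norm2 f <= norm2_on f 0 b.
Proof.
  intros Hs. unfold in_l2, l2norm2.
  apply series_bounded. intros; apply pow2_ge_0.
  intros n. unfold sum_n, norm2_on.
  destruct (le_lt_dec n b).
  - apply sR_sub; try lia. intros; apply pow2_ge_0.
  - rewrite (sR_chasles _ 0 b n) by lia.
    assert (sum_n_m (fun k => Cmod (f k) ^ 2) (S b) n <= 0).
    { replace 0 with (sum_n_m (fun _ => 0) (S b) n).
      apply sR_le_loc. intros k Hk. rewrite Hs by lia. rewrite Cmod_0. lra.
      apply (sum_n_m_const_zero (G:=R_AbelianMonoid)). }
    lra.
Qed.

Lemma l2norm_nonneg f : in_l2 f -> 0 <= l2norm2 f.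
Proof.
  intros H. unfold l2norm2. eapply Rle_trans; [|apply partial_le_series; auto].
  2: intros; apply pow2_ge_0. instantiate (1:=0%nat). unfold sum_n. rewrite sum_n_n. apply pow2_ge_0.
Qed.

Lemma Linf_fin_iff alpha :
  Rbar_lt (Linf alpha 0) p_infty <-> exists L0, forall b, Lfin alpha 0 b <= L0.
Proof.
  unfold Linf. set (E := fun x => exists b : nat, (0 <= b)%nat /\ x = Lfin alpha 0 b).
  destruct (Lub_Rbar_correct E) as [Hub Hlub].
  split.
  - intros Hlt.
    assert (H0 : Rbar_le (Lfin alpha 0 0) (Lub_Rbar E)) by (apply Hub; exists 0%nat; split; auto).
    destruct (Lub_Rbar E) as [r| |] eqn:Er; simpl in *; try contradiction.
    exists r. intros b. assert (Rbar_le (Lfin alpha 0 b) (Finite r)).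
    { apply Hub. exists b; split; auto; lia. }
    exact H.
  - intros [L0 HL].
    assert (Rbar_le (Lub_Rbar E) (Finite L0)).
    { apply Hlub. intros x [b [_ ->]]. simpl. apply HL. }
    destruct (Lub_Rbar E); simpl in *; auto.
Qed.

Lemma part2 alpha :
  Rbar_lt (Linf alpha 0) p_infty <->
     exists eps : R, eps > 0 /\
       exists c : nat -> option nat, is_epsL_seq alpha eps c /\ seq_length c 0.
Proof.
  rewrite Linf_fin_iff. split.
  - intros [L0 HL]. exists (Rmax L0 0 + 1). split.
    { pose proof (Rmax_r L0 0). lra. }
    exists (fun k => match k with 0%nat => Some 0%nat | _ => None end).
    split; [split|].
    + reflexivity.
    + intros [|k]; simpl; auto.
      intros t _. pose proof (Rmax_l L0 0). specialize (HL (t - 1)%nat). lra.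
    + split; simpl; congruence.
  - intros [eps [Heps [c [[H0 Hk] [Hn H1]]]]].
    exists eps. intros b. specialize (Hk 0%nat). rewrite H0, H1 in Hk.
    specialize (Hk (S b)). replace (S b - 1)%nat with b in Hk by lia. apply Hk. lia.
Qed.

Lemma lfun_nonneg alpha a b f : 0 <= lfun alpha a b f.
Proof.
  unfold lfun. apply sR_nonneg; intros. apply sR_nonneg; intros.
  destruct (Nat.eqb _ _). lra. apply pow2_ge_0.
Qed.

Lemma dir1 alpha : Ralpha_bounded alpha -> Rbar_lt (Linf alpha 0) p_infty.
Proof.
  intros [M HM]. set (M' := Rmax M 0).
  assert (HM' : 0 <= M') by apply Rmax_r.
  assert (Hl : forall b f, supported_in f 0 b -> norm2_on f 0 b <= 1 ->
                 lfun alpha 0 b f <= 2 * mu alpha 0 b * M').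
  { intros b f Hs Hn. destruct (supp_series f b Hs) as [Hin Hle].
    destruct (HM f Hin) as [HR HRle].
    assert (HQ : Qf alpha f b <= M').
    { rewrite Qf_partial. eapply Rle_trans. apply partial_le_series; auto.
      intros; apply pow2_ge_0.
      eapply Rle_trans. apply HRle.
      pose proof (l2norm_nonneg f Hin). pose proof (Rmax_l M 0). fold M' in H0.
      destruct (Rle_dec 0 M). 
      - apply Rle_trans with (M * 1). apply Rmult_le_compat_l; lra. lra.
      - apply Rle_trans with 0. nra. lra. }
    rewrite lfun_var. pose proof (mu_nonneg alpha 0 b).
    pose proof (pow2_ge_0 (Xf alpha f b)). pose proof (pow2_ge_0 (Yf alpha f b)).
    assert (mu alpha 0 b * Qf alpha f b <= mu alpha 0 b * M') by (apply Rmult_le_compat_l; auto).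
    lra. }
  apply Linf_fin_iff. exists (sqrt (2 * M')). intros b.
  unfold Lfin. destruct (Rle_dec (mu alpha 0 b) 0) as [|Hmu]. apply sqrt_pos.
  apply Rnot_le_lt in Hmu. apply sqrt_le_1_alt.
  assert (Hs : real (lsup alpha 0 b) <= 2 * mu alpha 0 b * M').
  { unfold lsup.
    set (E := fun x => exists f : nat -> C, supported_in f 0 b /\ norm2_on f 0 b <= 1 /\ x = lfun alpha 0 b f).
    destruct (Lub_Rbar_correct E) as [_ Hlub].
    assert (Rbar_le (Lub_Rbar E) (Finite (2 * mu alpha 0 b * M'))).
    { apply Hlub. intros x [f [Hs [Hn ->]]]. simpl. apply Hl; auto. }
    destruct (Lub_Rbar E); simpl in *; try contradiction; auto.
    apply Rmult_le_pos; lra. }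
  replace (2 * M') with ((2 * mu alpha 0 b * M') * / mu alpha 0 b) by (field; lra).
  unfold Rdiv. apply Rmult_le_compat_r; auto. left. apply Rinv_0_lt_compat; auto.
Qed.

Lemma Cmod_sum (f : nat -> C) n m : Cmod (sum_n_m f n m) <= sum_n_m (fun j => Cmod (f j)) n m.
Proof.
  revert n. induction m as [|m IH]; intros n.
  - destruct n. rewrite !sum_n_n. lra.
    rewrite !sum_n_m_zero by lia. change (Cmod (RtoC 0) <= 0). rewrite Cmod_0. lra.
  - destruct (le_lt_dec n (S m)).
    + rewrite sum_n_Sm by lia. rewrite sR_Sm by lia.
      eapply Rle_trans; [apply Cmod_triangle|]. specialize (IH n). lra.
    + rewrite !sum_n_m_zero by lia. change (Cmod (RtoC 0) <= 0). rewrite Cmod_0. lra.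
Qed.

Lemma xsys_Cmod f k : xs f k ^ 2 + ys f k ^ 2 = Cmod (sum_n_m f 0 k) ^ 2.
Proof. rewrite Cmod2, Re_sum, Im_sum. reflexivity. Qed.

Lemma lsup_finite_bound alpha b : exists Mb, forall f, supported_in f 0 b ->
   norm2_on f 0 b <= 1 -> lfun alpha 0 b f <= Mb.
Proof.
  exists (2 * mu alpha 0 b * (mu alpha 0 b * INR (S b) ^ 2)).
  intros f Hs Hn.
  assert (HQ : Qf alpha f b <= mu alpha 0 b * INR (S b) ^ 2).
  { unfold Qf, mu. rewrite <- sR_mult_r. apply sR_le_loc. intros k Hk.
    apply Rmult_le_compat_l. apply pow2_ge_0.
    rewrite xsys_Cmod. apply pow_incr. split. apply Cmod_ge_0.
    eapply Rle_trans. apply Cmod_sum.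
    eapply Rle_trans. apply (sR_const_le _ _ _ 1).
    { intros j Hj. assert (Cmod (f j) ^ 2 <= 1).
      { eapply Rle_trans; [|apply Hn]. unfold norm2_on.
        apply (sR_single (fun k => Cmod (f k) ^ 2)). intros; apply pow2_ge_0. lia. }
      pose proof (Cmod_ge_0 (f j)). nra. }
    rewrite Rmult_1_r. apply le_INR. lia. }
  rewrite lfun_var. pose proof (mu_nonneg alpha 0 b).
  pose proof (pow2_ge_0 (Xf alpha f b)). pose proof (pow2_ge_0 (Yf alpha f b)).
  assert (mu alpha 0 b * Qf alpha f b <= mu alpha 0 b * (mu alpha 0 b * INR (S b) ^ 2))
    by (apply Rmult_le_compat_l; auto).
  lra.
Qed.

Lemma lfun_le_lsup alpha b L0 :
  (forall b, Lfin alpha 0 b <= L0) ->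
  forall f, 0 < mu alpha 0 b -> supported_in f 0 b -> norm2_on f 0 b <= 1 ->
  lfun alpha 0 b f <= L0 ^ 2 * mu alpha 0 b.
Proof.
  intros HL f Hmu Hs Hn.
  specialize (HL b). unfold Lfin in HL.
  destruct (Rle_dec (mu alpha 0 b) 0) as [|_]; [lra|].
  unfold lsup in HL.
  set (E := fun x => exists f : nat -> C, supported_in f 0 b /\ norm2_on f 0 b <= 1 /\ x = lfun alpha 0 b f) in HL.
  destruct (Lub_Rbar_correct E) as [Hub Hlub].
  destruct (lsup_finite_bound alpha b) as [Mb HMb].
  assert (H1 : Rbar_le (Lub_Rbar E) (Finite Mb)).
  { apply Hlub. intros x [g [Hg1 [Hg2 ->]]]. simpl. apply HMb; auto. }
  assert (H2 : Rbar_le (lfun alpha 0 b f) (Lub_Rbar E)).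
  { apply Hub. exists f. auto. }
  destruct (Lub_Rbar E) as [r| |]; simpl in *; try contradiction.
  pose proof (lfun_nonneg alpha 0 b f).
  assert (Hx : 0 <= r / mu alpha 0 b).
  { unfold Rdiv. apply Rmult_le_pos. lra. left. apply Rinv_0_lt_compat. auto. }
  assert (r / mu alpha 0 b <= L0 ^ 2).
  { rewrite <- (pow2_sqrt (r / mu alpha 0 b)) by auto. apply pow_incr. split; auto. apply sqrt_pos. }
  assert (r <= L0 ^ 2 * mu alpha 0 b).
  { replace r with (r / mu alpha 0 b * mu alpha 0 b) by (field; lra).
    apply Rmult_le_compat_r; lra. }
  lra.
Qed.

Definition scl (t : R) (g : nat -> C) : nat -> C := fun j => (RtoC t * g j)%C.

Lemma xs_scl t g k : xs (scl t g) k = t * xs g k.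
Proof.
  unfold xs. rewrite <- sR_mult_l. apply sR_ext; intros. unfold scl, Re, Cmult, RtoC. simpl. ring.
Qed.
Lemma ys_scl t g k : ys (scl t g) k = t * ys g k.
Proof.
  unfold ys. rewrite <- sR_mult_l. apply sR_ext; intros. unfold scl, Im, Cmult, RtoC. simpl. ring.
Qed.

Lemma lfun_scl alpha b t g : lfun alpha 0 b (scl t g) = t ^ 2 * lfun alpha 0 b g.
Proof.
  rewrite !lfun_dbl.
  rewrite (sR_ext _ (fun k => t^2 * sum_n_m (fun n => asq alpha k * asq alpha n *
       ((xs g k - xs g n)^2 + (ys g k - ys g n)^2)) 0 b)).
  - rewrite sR_mult_l. reflexivity.
  - intros k _.
    rewrite (sR_ext _ (fun n => t^2 * (asq alpha k * asq alpha n *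
       ((xs g k - xs g n)^2 + (ys g k - ys g n)^2)))).
    + rewrite sR_mult_l. reflexivity.
    + intros n _. rewrite !xs_scl, !ys_scl. ring.
Qed.

Lemma norm_scl b t g : norm2_on (scl t g) 0 b = t ^ 2 * norm2_on g 0 b.
Proof.
  unfold norm2_on. rewrite <- sR_mult_l. apply sR_ext; intros. unfold scl.
  rewrite Cmod_mult, Cmod_R, Rpow_mult_distr, pow2_abs. reflexivity.
Qed.

Lemma supp_scl t g b : supported_in g 0 b -> supported_in (scl t g) 0 b.
Proof. intros H j Hj. unfold scl. rewrite H by auto. apply Cmult_0_r. Qed.

Lemma lfun_le_N alpha L0 :
  (forall b, Lfin alpha 0 b <= L0) ->
  forall b g, 0 < mu alpha 0 b -> supported_in g 0 b ->
  lfun alpha 0 b g <= L0 ^ 2 * mu alpha 0 b * norm2_on g 0 b.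
Proof.
  intros HL b g Hmu Hs.
  set (N := norm2_on g 0 b).
  assert (HN : 0 <= N) by (unfold N, norm2_on; apply sR_nonneg; intros; apply pow2_ge_0).
  pose proof (pow2_ge_0 L0) as HL0.
  destruct (Rle_lt_or_eq_dec 0 N HN) as [Hpos|H0].
  - set (t := / sqrt N).
    assert (Ht : t ^ 2 = / N).
    { unfold t. simpl. rewrite Rmult_1_r, <- Rinv_mult, sqrt_sqrt; lra. }
    assert (H := lfun_le_lsup alpha b L0 HL (scl t g) Hmu (supp_scl t g b Hs)).
    rewrite norm_scl, lfun_scl, Ht in H. fold N in H.
    assert (/ N * lfun alpha 0 b g <= L0 ^ 2 * mu alpha 0 b).
    { apply H. rewrite Rinv_l; lra. }
    replace (lfun alpha 0 b g) with (N * (/ N * lfun alpha 0 b g)) by (field; lra).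
    rewrite (Rmult_comm _ N). apply Rmult_le_compat_l; lra.
  - rewrite <- H0. rewrite Rmult_0_r.
    destruct (Rle_dec (lfun alpha 0 b g) 0) as [|Hgt]; auto.
    apply Rnot_le_lt in Hgt. exfalso.
    set (t := sqrt ((L0 ^ 2 * mu alpha 0 b + 1) / lfun alpha 0 b g)).
    assert (Hq : 0 <= (L0 ^ 2 * mu alpha 0 b + 1) / lfun alpha 0 b g).
    { unfold Rdiv. apply Rmult_le_pos. nra. left; apply Rinv_0_lt_compat; auto. }
    assert (Ht : t ^ 2 = (L0 ^ 2 * mu alpha 0 b + 1) / lfun alpha 0 b g) by (unfold t; apply pow2_sqrt; auto).
    assert (H := lfun_le_lsup alpha b L0 HL (scl t g) Hmu (supp_scl t g b Hs)).
    rewrite norm_scl, lfun_scl, Ht in H. fold N in H. rewrite <- H0 in H.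
    assert (HH : (L0 ^ 2 * mu alpha 0 b + 1) / lfun alpha 0 b g * lfun alpha 0 b g <= L0 ^ 2 * mu alpha 0 b).
    { apply H. lra. }
    replace ((L0 ^ 2 * mu alpha 0 b + 1) / lfun alpha 0 b g * lfun alpha 0 b g) with (L0 ^ 2 * mu alpha 0 b + 1) in HH by (field; lra).
    lra.
Qed.

Definition ir (k0 r : nat) (j : nat) : R := if (Nat.ltb k0 j && Nat.leb j r)%bool then 1 else 0.
Definition ind k0 r : nat -> C := fun j => RtoC (ir k0 r j).

Lemma sR_zero_fun n m : @eq R (sum_n_m (fun _ => 0) n m) 0.
Proof. apply (sum_n_m_const_zero (G:=R_AbelianMonoid)). Qed.

Lemma ir_low k0 r : @eq R (sum_n_m (ir k0 r) 0 k0) 0.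
Proof.
  rewrite (sR_ext _ (fun _ => 0)). apply sR_zero_fun.
  intros k Hk. unfold ir. destruct (Nat.ltb_spec k0 k); try lia. reflexivity.
Qed.

Lemma ir_high k0 r n : (k0 < r)%nat -> (r <= n)%nat ->
  @eq R (sum_n_m (ir k0 r) (S k0) n) (INR (r - k0)).
Proof.
  intros H1 H2. rewrite (sR_chasles _ (S k0) r n) by lia.
  rewrite (sR_ext _ (fun _ => 1) (S k0) r).
  2:{ intros k Hk. unfold ir. destruct (Nat.ltb_spec k0 k); try lia.
      destruct (Nat.leb_spec k r); try lia. reflexivity. }
  rewrite (sR_ext (ir k0 r) (fun _ => 0) (S r) n).
  2:{ intros k Hk. unfold ir. destruct (Nat.leb_spec k r); try lia.
      rewrite Bool.andb_false_r. reflexivity. }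
  rewrite sR_zero_fun, sum_n_m_const. simpl (S r - S k0)%nat. fixR. ring.
Qed.

Lemma ind_supp k0 r b : (r <= b)%nat -> supported_in (ind k0 r) 0 b.
Proof.
  intros H j Hj. unfold ind, ir. destruct (Nat.leb_spec j r); try lia.
  rewrite Bool.andb_false_r. reflexivity.
Qed.

Lemma ind_norm k0 r b : (k0 < r <= b)%nat -> norm2_on (ind k0 r) 0 b = INR (r - k0).
Proof.
  intros H. unfold norm2_on.
  rewrite (sR_ext _ (ir k0 r)).
  2:{ intros k _. unfold ind. rewrite Cmod_R, pow2_abs. unfold ir.
      destruct (_ && _)%bool; ring. }
  rewrite (sR_chasles _ 0 k0 b) by lia. rewrite ir_low, ir_high by lia. fixR. ring.
Qed.

Lemma ind_xs k0 r n : (k0 < r)%nat -> (r <= n)%nat ->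
  xs (ind k0 r) n - xs (ind k0 r) k0 = INR (r - k0).
Proof.
  intros H1 H2. unfold xs. rewrite (sR_chasles _ 0 k0 n) by lia.
  change (fun j => Re (ind k0 r j)) with (ir k0 r).
  rewrite ir_high by lia. fixR. ring.
Qed.

Lemma tail_bound alpha L0 k0 A : (forall b, Lfin alpha 0 b <= L0) ->
  (forall b, mu alpha 0 b <= A) -> 0 < asq alpha k0 ->
  forall r b, (k0 < r <= b)%nat ->
  sum_n_m (asq alpha) r b * (asq alpha k0 * INR (r - k0)) <= L0 ^ 2 * A.
Proof.
  intros HL HA Hk r b Hr.
  set (h := ind k0 r). set (d := INR (r - k0)).
  assert (Hd : 0 < d) by (apply lt_0_INR; lia).
  assert (Hasq : forall k, 0 <= asq alpha k) by (intros; apply pow2_ge_0).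
  assert (Hmu : asq alpha k0 <= mu alpha 0 b).
  { change (mu alpha 0 b) with (sum_n_m (asq alpha) 0 b). apply sR_single; auto. lia. }
  assert (Hup : lfun alpha 0 b h <= L0 ^ 2 * A * d).
  { eapply Rle_trans. apply lfun_le_N; auto. lra. apply ind_supp; lia.
    unfold h. rewrite ind_norm by lia. fold d.
    pose proof (pow2_ge_0 L0). pose proof (mu_nonneg alpha 0 b). specialize (HA b).
    apply Rmult_le_compat_r. lra. apply Rmult_le_compat_l; lra. }
  set (F := fun k n => asq alpha k * asq alpha n * ((xs h k - xs h n)^2 + (ys h k - ys h n)^2)).
  assert (HF : forall k n, 0 <= F k n).
  { intros. unfold F. apply Rmult_le_pos. apply Rmult_le_pos; auto.
    pose proof (pow2_ge_0 (xs h k - xs h n)). pose proof (pow2_ge_0 (ys h k - ys h n)). lra. }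
  assert (Hlow : asq alpha k0 * d ^ 2 * sum_n_m (asq alpha) r b <= lfun alpha 0 b h).
  { rewrite lfun_dbl. fold F.
    change (sum_n_m (fun k => sum_n_m (fun n => F k n) 0 b) 0 b) with
           (sum_n_m (fun k => sum_n_m (F k) 0 b) 0 b).
    eapply Rle_trans; [|apply (sR_single (fun k => sum_n_m (F k) 0 b) 0 b k0)].
    2:{ intros; apply sR_nonneg; auto. }
    2: lia.
    eapply Rle_trans; [|apply (sR_sub (F k0) 0 b r b)]; try lia; auto.
    rewrite <- sR_mult_l. apply sR_le_loc. intros n Hn.
    unfold F. pose proof (ind_xs k0 r n ltac:(lia) ltac:(lia)). fold h d in H.
    replace ((xs h k0 - xs h n) ^ 2) with (d ^ 2) by (rewrite <- H; ring).
    pose proof (pow2_ge_0 (ys h k0 - ys h n)). pose proof (Hasq n).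
    assert (0 <= asq alpha k0 * asq alpha n) by (apply Rmult_le_pos; auto).
    nra. }
  apply (Rmult_le_reg_l d); auto.
  replace (d * (sum_n_m (asq alpha) r b * (asq alpha k0 * d))) with (asq alpha k0 * d ^ 2 * sum_n_m (asq alpha) r b) by (fixR; ring).
  lra.
Qed.

Lemma T_bound alpha L0 k0 A : (forall b, Lfin alpha 0 b <= L0) ->
  (forall b, mu alpha 0 b <= A) -> 0 < asq alpha k0 ->
  forall b j, (j <= b)%nat ->
  sum_n_m (asq alpha) j b * (INR j + 1) <=
     A * (INR k0 + 1) + L0 ^ 2 * A * (INR k0 + 2) / asq alpha k0.
Proof.
  intros HL HA Hk b j Hj.
  assert (Hasq : forall k, 0 <= asq alpha k) by (intros; apply pow2_ge_0).
  assert (HT0 : 0 <= sum_n_m (asq alpha) j b) by (apply sR_nonneg; auto).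
  assert (HA0 : 0 <= A) by (eapply Rle_trans; [apply mu_nonneg|apply (HA 0%nat)]).
  assert (H2 : 0 <= L0 ^ 2 * A * (INR k0 + 2) / asq alpha k0).
  { unfold Rdiv. apply Rmult_le_pos. apply Rmult_le_pos. apply Rmult_le_pos; auto.
    apply pow2_ge_0. pose proof (pos_INR k0). lra. left; apply Rinv_0_lt_compat; auto. }
  destruct (le_lt_dec j k0).
  - assert (sum_n_m (asq alpha) j b <= A).
    { eapply Rle_trans; [|apply (HA b)]. change (mu alpha 0 b) with (sum_n_m (asq alpha) 0 b).
      apply sR_sub; auto; lia. }
    assert (INR j + 1 <= INR k0 + 1) by (apply le_INR in l; lra).
    assert (sum_n_m (asq alpha) j b * (INR j + 1) <= A * (INR k0 + 1)).
    { apply Rmult_le_compat; auto. pose proof (pos_INR j); lra. }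
    lra.
  - pose proof (tail_bound alpha L0 k0 A HL HA Hk j b ltac:(lia)) as Ht.
    rewrite minus_INR in Ht by lia.
    assert (Hj1 : INR k0 + 1 <= INR j) by (rewrite <- S_INR; apply le_INR; lia).
    pose proof (pos_INR k0).
    assert (INR j + 1 <= (INR k0 + 2) * (INR j - INR k0)) by nra.
    set (T := sum_n_m (asq alpha) j b) in *.
    assert (T * (INR j + 1) <= T * ((INR k0 + 2) * (INR j - INR k0))) by (apply Rmult_le_compat_l; auto).
    assert (T * ((INR k0 + 2) * (INR j - INR k0)) = (INR k0 + 2) / asq alpha k0 * (T * (asq alpha k0 * (INR j - INR k0)))) by (field; lra).
    assert ((INR k0 + 2) / asq alpha k0 * (T * (asq alpha k0 * (INR j - INR k0))) <= (INR k0 + 2) / asq alpha k0 * (L0 ^ 2 * A)).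
    { apply Rmult_le_compat_l; auto. unfold Rdiv. apply Rmult_le_pos. lra. left; apply Rinv_0_lt_compat; auto. }
    assert ((INR k0 + 2) / asq alpha k0 * (L0 ^ 2 * A) = L0 ^ 2 * A * (INR k0 + 2) / asq alpha k0) by (field; lra).
    assert (0 <= A * (INR k0 + 1)) by (apply Rmult_le_pos; lra).
    lra.
Qed.

Lemma sq_from_bound (T x B : R) : 0 <= T -> 0 < x -> T * x <= B -> T ^ 2 <= B ^ 2 * / x ^ 2.
Proof.
  intros HT Hx H.
  assert ((T * x) ^ 2 <= B ^ 2) by (apply pow_incr; split; [apply Rmult_le_pos; lra| auto]).
  replace (T ^ 2) with ((T * x) ^ 2 * / x ^ 2) by (field; lra).
  apply Rmult_le_compat_r; auto. left. apply Rinv_0_lt_compat. apply pow_lt; auto.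
Qed.

Lemma Tsq_sum alpha L0 k0 A : (forall b, Lfin alpha 0 b <= L0) ->
  (forall b, mu alpha 0 b <= A) -> 0 < asq alpha k0 ->
  forall b, sum_n_m (fun j => (sum_n_m (asq alpha) j b) ^ 2) 0 b <=
     2 * (A * (INR k0 + 1) + L0 ^ 2 * A * (INR k0 + 2) / asq alpha k0) ^ 2.
Proof.
  intros HL HA Hk b. set (B := A * (INR k0 + 1) + L0 ^ 2 * A * (INR k0 + 2) / asq alpha k0).
  eapply Rle_trans. apply (sR_le_loc _ (fun j => B ^ 2 * / (INR j + 1) ^ 2)).
  { intros j Hj. apply sq_from_bound. apply sR_nonneg; intros; apply pow2_ge_0.
    pose proof (pos_INR j); lra. apply (T_bound alpha L0 k0 A); auto; lia. }
  rewrite sR_mult_l. pose proof (inv_sq_sum b).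
  assert (0 < / (INR b + 1)) by (apply Rinv_0_lt_compat; pose proof (pos_INR b); lra).
  pose proof (pow2_ge_0 B). nra.
Qed.

Lemma main_bound alpha L0 k0 A : (forall b, Lfin alpha 0 b <= L0) ->
  (forall b, mu alpha 0 b <= A) -> 0 < asq alpha k0 ->
  forall f b, (k0 <= b)%nat ->
  Qf alpha f b <= (L0 ^ 2 / 2 + 2 * (A * (INR k0 + 1) + L0 ^ 2 * A * (INR k0 + 2) / asq alpha k0) ^ 2 / asq alpha k0) * norm2_on f 0 b.
Proof.
  intros HL HA Hk f b Hb.
  set (B := A * (INR k0 + 1) + L0 ^ 2 * A * (INR k0 + 2) / asq alpha k0).
  set (N := norm2_on f 0 b). set (mu0 := mu alpha 0 b).
  assert (Hasq : forall k, 0 <= asq alpha k) by (intros; apply pow2_ge_0).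
  assert (Hmu : asq alpha k0 <= mu0).
  { unfold mu0. change (mu alpha 0 b) with (sum_n_m (asq alpha) 0 b). apply sR_single; auto. lia. }
  assert (HN : 0 <= N) by (unfold N, norm2_on; apply sR_nonneg; intros; apply pow2_ge_0).
  set (g := fun j => if Nat.leb j b then f j else 0%C).
  assert (Hg : supported_in g 0 b).
  { intros j Hj. unfold g. destruct (Nat.leb_spec j b); try lia. reflexivity. }
  assert (Hlg : lfun alpha 0 b g = lfun alpha 0 b f).
  { unfold lfun. apply sR_ext; intros k Hk'. apply sR_ext; intros n Hn.
    rewrite (sum_n_m_ext_loc g f); auto.
    intros j Hj. unfold g. destruct (Nat.leb_spec j b); auto. lia. }
  assert (HNg : norm2_on g 0 b = N).
  { unfold N, norm2_on. apply sR_ext. intros j Hj. unfold g. destruct (Nat.leb_spec j b); auto. lia. }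
  assert (Hl : lfun alpha 0 b f <= L0 ^ 2 * mu0 * N).
  { rewrite <- Hlg, <- HNg. apply lfun_le_N; auto. unfold mu0 in Hmu. lra. }
  set (S2 := sum_n_m (fun j => (sum_n_m (asq alpha) j b) ^ 2) 0 b).
  assert (HS2 : S2 <= 2 * B ^ 2) by (apply (Tsq_sum alpha L0 k0 A); auto).
  assert (HNs : N = sum_n_m (fun j => Re (f j) ^ 2) 0 b + sum_n_m (fun j => Im (f j) ^ 2) 0 b).
  { unfold N, norm2_on. rewrite <- sR_plus. apply sR_ext; intros. apply Cmod2. }
  assert (HX : Xf alpha f b ^ 2 <= sum_n_m (fun j => Re (f j) ^ 2) 0 b * S2).
  { rewrite Xf_inter. apply sR_CS. }
  assert (HY : Yf alpha f b ^ 2 <= sum_n_m (fun j => Im (f j) ^ 2) 0 b * S2).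
  { rewrite Yf_inter. apply sR_CS. }
  assert (HS2' : 0 <= S2) by (apply sR_nonneg; intros; apply pow2_ge_0).
  assert (HXY : Xf alpha f b ^ 2 + Yf alpha f b ^ 2 <= N * (2 * B ^ 2)).
  { assert (0 <= sum_n_m (fun j => Re (f j) ^ 2) 0 b) by (apply sR_nonneg; intros; apply pow2_ge_0).
    assert (0 <= sum_n_m (fun j => Im (f j) ^ 2) 0 b) by (apply sR_nonneg; intros; apply pow2_ge_0).
    rewrite HNs. nra. }
  pose proof (lfun_var alpha b f) as Hv. fold mu0 in Hv.
  set (Q := Qf alpha f b) in *.
  assert (H2 : 2 * mu0 * Q <= L0 ^ 2 * mu0 * N + 4 * B ^ 2 * N) by lra.
  assert (HB0 : 0 <= B ^ 2 * N) by (apply Rmult_le_pos; auto; apply pow2_ge_0).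
  assert (H3 : 4 * B ^ 2 * N <= mu0 * (4 * B ^ 2 * N / asq alpha k0)).
  { replace (mu0 * (4 * B ^ 2 * N / asq alpha k0)) with ((mu0 / asq alpha k0) * (4 * B ^ 2 * N)) by (field; lra).
    replace (4 * B ^ 2 * N) with (1 * (4 * B ^ 2 * N)) at 1 by ring.
    apply Rmult_le_compat_r. lra.
    apply (Rmult_le_reg_r (asq alpha k0)); auto. rewrite Rmult_1_l.
    replace (mu0 / asq alpha k0 * asq alpha k0) with mu0 by (field; lra). auto. }
  apply (Rmult_le_reg_l (2 * mu0)). lra.
  replace (2 * mu0 * ((L0 ^ 2 / 2 + 2 * B ^ 2 / asq alpha k0) * N)) with
          (L0 ^ 2 * mu0 * N + mu0 * (4 * B ^ 2 * N / asq alpha k0)) by (field; lra).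
  lra.
Qed.

Lemma dir2 alpha : in_l2 alpha -> Rbar_lt (Linf alpha 0) p_infty -> Ralpha_bounded alpha.
Proof.
  intros Hal HLinf. apply Linf_fin_iff in HLinf. destruct HLinf as [L0 HL].
  destruct (classic (exists k0, alpha k0 <> 0%C)) as [[k0 Hk0]|Hno].
  - assert (Hk : 0 < asq alpha k0).
    { unfold asq. apply Cmod_gt_0 in Hk0. apply pow_lt. auto. }
    set (A := Series (asq alpha)).
    assert (HA : forall b, mu alpha 0 b <= A).
    { intros b. unfold A. change (mu alpha 0 b) with (sum_n (asq alpha) b).
      apply partial_le_series. intros; apply pow2_ge_0. exact Hal. }
    set (C := L0 ^ 2 / 2 + 2 * (A * (INR k0 + 1) + L0 ^ 2 * A * (INR k0 + 2) / asq alpha k0) ^ 2 / asq alpha k0).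
    assert (HC : 0 <= C).
    { unfold C. apply Rplus_le_le_0_compat. pose proof (pow2_ge_0 L0); lra.
      unfold Rdiv. apply Rmult_le_pos. apply Rmult_le_pos. lra. apply pow2_ge_0.
      left; apply Rinv_0_lt_compat; auto. }
    exists C. intros f Hf.
    apply series_bounded. intros; apply pow2_ge_0.
    intros b. rewrite <- Qf_partial.
    eapply Rle_trans. apply (sR_sub _ 0 (b + k0) 0 b); try lia.
    { intros; apply Rmult_le_pos. apply pow2_ge_0.
      pose proof (pow2_ge_0 (xs f k)). pose proof (pow2_ge_0 (ys f k)). lra. }
    change (sum_n_m (fun k => asq alpha k * (xs f k ^ 2 + ys f k ^ 2)) 0 (b + k0)) with (Qf alpha f (b + k0)).
    eapply Rle_trans. apply (main_bound alpha L0 k0 A); auto. lia. fold C.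
    apply Rmult_le_compat_l; auto. unfold norm2_on.
    change (sum_n_m (fun k => Cmod (f k) ^ 2) 0 (b + k0)) with (sum_n (fun k => Cmod (f k) ^ 2) (b + k0)).
    apply partial_le_series. intros; apply pow2_ge_0. exact Hf.
  - exists 0. intros f Hf.
    assert (Hz : forall k, Cmod (Ralpha alpha f k) ^ 2 = 0).
    { intros k. assert (alpha k = 0%C) by (apply NNPP; intros Hn; apply Hno; exists k; auto).
      unfold Ralpha. rewrite H, Cmult_0_l. change (Cmod (RtoC 0) ^ 2 = 0). rewrite Cmod_0. ring. }
    assert (Hb : ex_series (fun k => Cmod (Ralpha alpha f k) ^ 2) /\ Series (fun k => Cmod (Ralpha alpha f k) ^ 2) <= 0).
    { apply series_bounded. intros; apply pow2_ge_0.
      intros n. unfold sum_n. rewrite (sR_ext _ (fun _ => 0)). rewrite sR_zero_fun. lra.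
      intros; apply Hz. }
    destruct Hb as [Hb1 Hb2]. split. exact Hb1. unfold l2norm2. lra.
Qed.

Theorem theorem4p4 (alpha : nat -> C) (Halpha : in_l2 alpha) :
  (Ralpha_bounded alpha <-> Rbar_lt (Linf alpha 0) p_infty) /\
  (Rbar_lt (Linf alpha 0) p_infty <->
     exists eps : R, eps > 0 /\
       exists c : nat -> option nat, is_epsL_seq alpha eps c /\ seq_length c 0).
Proof.
  split.
  - split. apply dir1. apply dir2. exact Halpha.
  - apply part2.
Qed.
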